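(* Let $\psi\in C^1((0,\infty))$. (1) If $\psi$ is concave, then $C_\psi\ge0$. (2) If $\psi(x)+\psi(1/x)\neq2\psi(1)$ for some $x>0$, then $C_\psi\le0$.
   Context: For $x,y>0$, $\widetilde{\psi}(x,y):=[\psi'(x)+\psi'(y)](1-xy)+x[\psi(y)-\psi(1/x)]+y[\psi(x)-\psi(1/y)]$, and $C_\psi:=\inf\frac{\widetilde{\psi}(x,y)}{(\psi(x)+\psi(y)-2\psi(1))^2}\in[-\infty,\infty]$, the infimum taken over all $x,y>0$ with $\psi(x)+\psi(y)\neq2\psi(1)$. *)

(* Defs.v *)
From Stdlib Require Import Reals Lra.
Open Scope R_scope.

Definition C1_on_pos (psi dpsi : R -> R) : Prop :=
  (forall x, 0 < x -> derivable_pt_lim psi x (dpsi x)) /\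
  (forall x, 0 < x -> continuity_pt dpsi x).

Definition concave_on_pos (psi : R -> R) : Prop :=
  forall x y t, 0 < x -> 0 < y -> 0 <= t <= 1 ->
    t * psi x + (1 - t) * psi y <= psi (t * x + (1 - t) * y).

Definition psi_tilde (psi dpsi : R -> R) (x y : R) : R :=
  (dpsi x + dpsi y) * (1 - x * y)
  + x * (psi y - psi (/ x)) + y * (psi x - psi (/ y)).

(* the set whose infimum (in [-oo,+oo]) is C_psi *)
Definition C_set (psi dpsi : R -> R) (r : R) : Prop :=
  exists x y, 0 < x /\ 0 < y /\ psi x + psi y <> 2 * psi 1 /\
    r = psi_tilde psi dpsi x y / (psi x + psi y - 2 * psi 1) ^ 2.

Definition is_lower_bound (S : R -> Prop) (m : R) : Prop :=
  forall r, S r -> m <= r.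

(* C_psi >= 0  iff  0 is a lower bound of the set (inf of empty set = +oo) *)
Definition C_nonneg (psi dpsi : R -> R) : Prop :=
  is_lower_bound (C_set psi dpsi) 0.

(* C_psi <= 0  iff  every real lower bound is <= 0 *)
Definition C_nonpos (psi dpsi : R -> R) : Prop :=
  forall m, is_lower_bound (C_set psi dpsi) m -> m <= 0.

(* Main.v *)
Require Import Defs.
From Stdlib Require Import Reals Lra.
Open Scope R_scope.

Lemma tangent_le (psi dpsi : R -> R) (hC1 : C1_on_pos psi dpsi)
  (hc : concave_on_pos psi) x z : 0 < x -> 0 < z ->
  psi z <= psi x + dpsi x * (z - x).
Proof.
  intros hx hz.
  destruct (Req_dec z x) as [E|NE].
  { subst; lra. }
  destruct (Rle_dec (psi z) (psi x + dpsi x * (z - x))) as [H|H]; [exact H|].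
  exfalso.
  set (e := psi z - psi x - dpsi x * (z - x)).
  assert (he : 0 < e) by (unfold e; lra).
  set (A := Rabs (z - x)).
  assert (hA : 0 < A) by (unfold A; apply Rabs_pos_lt; lra).
  destruct hC1 as [hd _].
  destruct (hd x hx (e / A)) as [delta hdel].
  { apply Rdiv_lt_0_compat; lra. }
  set (t := Rmin (1/2) (delta / (2 * A))).
  assert (hdp : 0 < delta) by apply cond_pos.
  assert (ht0 : 0 < t).
  { unfold t; apply Rmin_glb_lt; [lra|]. apply Rdiv_lt_0_compat; lra. }
  assert (ht1 : t <= 1/2) by (unfold t; apply Rmin_l).
  assert (ht2 : t <= delta / (2 * A)) by (unfold t; apply Rmin_r).
  set (h := t * (z - x)).
  assert (hh0 : h <> 0).
  { unfold h; intro Hc; apply Rmult_integral in Hc; destruct Hc; lra. }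
  assert (habs : Rabs h = t * A).
  { unfold h, A; rewrite Rabs_mult, Rabs_pos_eq; lra. }
  assert (hhd : Rabs h < delta).
  { rewrite habs.
    assert (t * A <= delta / (2 * A) * A) by (apply Rmult_le_compat_r; lra).
    assert (delta / (2 * A) * A = delta / 2) by (field; lra). lra. }
  specialize (hdel h hh0 hhd).
  assert (hcv := hc z x t hz hx ltac:(lra)).
  replace (t * z + (1 - t) * x) with (x + h) in hcv by (unfold h; ring).
  set (q := psi (x + h) - psi x) in *.
  assert (hq : q - dpsi x * h >= t * e).
  { assert (dpsi x * h = t * (dpsi x * (z - x))) by (unfold h; ring). unfold q, e. lra. }
  assert (Heq : q - dpsi x * h = h * (q / h - dpsi x)) by (field; exact hh0).
  assert (Rabs (q - dpsi x * h) = q - dpsi x * h).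
  { apply Rabs_pos_eq. nra. }
  rewrite Heq, Rabs_mult, habs in H0.
  assert (t * A * Rabs (q / h - dpsi x) < t * A * (e / A)).
  { apply Rmult_lt_compat_l; [nra|exact hdel]. }
  assert (t * A * (e / A) = t * e) by (field; lra).
  lra.
Qed.

Theorem mainTheorem15 (psi dpsi : R -> R) (hC1 : C1_on_pos psi dpsi) :
  (concave_on_pos psi -> C_nonneg psi dpsi) /\
  ((exists x, 0 < x /\ psi x + psi (/ x) <> 2 * psi 1) -> C_nonpos psi dpsi).
Proof.
  split.
  - intros hc r [x [y [hx [hy [hne ->]]]]].
    assert (hxy : 0 < / y) by (apply Rinv_0_lt_compat; lra).
    assert (hyx : 0 < / x) by (apply Rinv_0_lt_compat; lra).
    assert (T1 := tangent_le psi dpsi hC1 hc x (/ y) hx hxy).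
    assert (T2 := tangent_le psi dpsi hC1 hc y (/ x) hy hyx).
    assert (P : 0 <= psi_tilde psi dpsi x y).
    { unfold psi_tilde.
      assert (y * psi (/ y) <= y * (psi x + dpsi x * (/ y - x)))
        by (apply Rmult_le_compat_l; lra).
      assert (x * psi (/ x) <= x * (psi y + dpsi y * (/ x - y)))
        by (apply Rmult_le_compat_l; lra).
      assert (y * (dpsi x * (/ y - x)) = dpsi x * (1 - x * y)) by (field; lra).
      assert (x * (dpsi y * (/ x - y)) = dpsi y * (1 - x * y)) by (field; lra).
      nra. }
    assert (D : 0 < (psi x + psi y - 2 * psi 1) ^ 2).
    { set (u := psi x + psi y - 2 * psi 1) in *.
      assert (u <> 0) by (unfold u; lra).
      simpl. rewrite Rmult_1_r. destruct (Rlt_or_le 0 u); nra. }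
    unfold Rdiv. apply Rmult_le_pos; [exact P|].
    left; apply Rinv_0_lt_compat; exact D.
  - intros [x0 [hx0 hne]] m hm.
    assert (hi : 0 < / x0) by (apply Rinv_0_lt_compat; lra).
    apply (hm 0).
    exists x0, (/ x0). split; [lra|]. split; [lra|]. split; [exact hne|].
    unfold psi_tilde. rewrite Rinv_inv, Rinv_r by lra.
    unfold Rdiv. ring.
Qed.
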